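(* Let $\varphi=\nu\tilde n.\sigma$ be an extended well-formed frame with respect to $\mathtt{s}\in\tilde n$ such that $\varphi\nvdash\mathtt{s}$. Let $U$, $V$ and $M$ be terms public with respect to $\varphi$, with all variables of $U$ and $V$ in $\mathrm{dom}(\sigma)$ and $M$ ground. Let $W,W'$ be subterms of terms in $\mathrm{ran}(\sigma)$ such that for every occurrence $q_{\mathtt{s}}$ of $\mathtt{s}$ in $W$ (respectively $W'$) there is an encryption occurrence $q_{\mathsf{enc}}$ in $W$ (respectively $W'$) with $q_{\mathsf{enc}}<q_{\mathtt{s}}$. Then (1) $U\sigma[\mathtt{s}/M]=V\sigma[\mathtt{s}/M]$ implies $U\sigma=V\sigma$; (2) $U\sigma[\mathtt{s}/M]=W[\mathtt{s}/M]$ implies $U\sigma=W$; (3) $W[\mathtt{s}/M]=W'[\mathtt{s}/M]$ implies $W=W'$ (all equalities syntactic).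
   Context: Terms over $\Sigma=\{\mathsf{enc}/3,\mathsf{dec}/2,\mathsf{enca}/3,\mathsf{deca}/2,\mathsf{pub}/1,\mathsf{priv}/1,\langle\cdot,\cdot\rangle/2,\pi_1/1,\pi_2/1,\mathsf{sign}/2,\mathsf{check}/3,\mathsf{retrieve}/1\}$, constants, names and variables. Equational theory $E$: $\pi_i(\langle z_1,z_2\rangle)=z_i$, $\mathsf{dec}(\mathsf{enc}(z_1,z_2,z_3),z_2)=z_1$, $\mathsf{deca}(\mathsf{enca}(z_1,\mathsf{pub}(z_2),z_3),\mathsf{priv}(z_2))=z_1$, $\mathsf{check}(z_1,\mathsf{sign}(z_1,\mathsf{priv}(z_2)),\mathsf{pub}(z_2))=\mathsf{ok}$, $\mathsf{retrieve}(\mathsf{sign}(z_1,z_2))=z_1$; left-to-right orientation is convergent, giving normal forms. Positions: sequences of positive integers, prefix order $\le$ ($<$ strict), $T|_p$ subterm, $\mathrm{head}(T)$ root symbol; $T[\mathtt{s}/M]$ replaces each occurrence of $\mathtt{s}$ by $M$. Frame $\varphi=\nu\tilde n.\sigma$: restricted names $\tilde n$, acyclic substitution $\sigma$. Public term w.r.t. $\varphi$: no name of $\tilde n$, no $\mathsf{priv}$. $\varphi\vdash M$: least relation containing $x\sigma$ ($x\in\mathrm{dom}(\sigma)$) and names outside $\tilde n$, closed under symbols other than $\mathsf{priv}$ and under $=_E$. An encryption occurrence $q$ in $U$ (head of $U|_q$ in $\{\mathsf{enc},\mathsf{enca}\}$) is an agent encryption w.r.t. names $\tilde m$ if $U|_{q\cdot3}\in\tilde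 m$, a probabilistic encryption w.r.t. a set of terms $S$ if for all $V\in S$ and $p$ with $V|_p=U|_{q\cdot3}$, $p=q'\cdot3$ with $V|_{q'}=U|_q$, and plaintext-above a position $q_T$ if $q\cdot1\le q_T$. Extended well-formed w.r.t. $\mathtt{s}$: (1) all terms of $\sigma$ are in normal form; (2) every agent encryption w.r.t. $\tilde n$ in $\sigma$ is probabilistic w.r.t. $\mathrm{ran}(\sigma)$; (3) for every occurrence $q_{\mathtt{s}}$ of $\mathtt{s}$ in $y\sigma$, $y\in\mathrm{dom}(\sigma)$, some agent encryption w.r.t. $\tilde n\setminus\{\mathtt{s}\}$ is plaintext-above $q_{\mathtt{s}}$; (4) the lowest such encryption $q_0$ satisfies $\mathrm{head}(y\sigma|_q)\in\{\langle\rangle,\mathsf{sign}\}$ for all $q_0<q<q_{\mathtt{s}}$. *)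

(* Defs.v *)
From Stdlib Require Import List Arith Relations.
Import ListNotations.

(* Function symbols of Sigma, grouped by arity (so arities are built in). *)
Inductive sym1 : Type := Pub | Priv | Pi1 | Pi2 | Retrieve.
Inductive sym2 : Type := Dec | Deca | Pair | Sign.
Inductive sym3 : Type := Enc | Enca | Check.

Inductive term : Type :=
| Var  (x : nat)
| Name (n : nat)
| Cst  (c : nat)
| Fn1  (f : sym1) (t1 : term)
| Fn2  (f : sym2) (t1 t2 : term)
| Fn3  (f : sym3) (t1 t2 t3 : term).

Definition ok : term := Cst 0.

(* root rewrite rules (left-to-right orientation of E), all instances *)
Inductive rule : term -> term -> Prop :=
| r_pi1 z1 z2 : rule (Fn1 Pi1 (Fn2 Pair z1 z2)) z1
| r_pi2 z1 z2 : rule (Fn1 Pi2 (Fn2 Pair z1 z2)) z2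
| r_dec z1 z2 z3 : rule (Fn2 Dec (Fn3 Enc z1 z2 z3) z2) z1
| r_deca z1 z2 z3 :
    rule (Fn2 Deca (Fn3 Enca z1 (Fn1 Pub z2) z3) (Fn1 Priv z2)) z1
| r_check z1 z2 :
    rule (Fn3 Check z1 (Fn2 Sign z1 (Fn1 Priv z2)) (Fn1 Pub z2)) ok
| r_retrieve z1 z2 : rule (Fn1 Retrieve (Fn2 Sign z1 z2)) z1.

Inductive step : term -> term -> Prop :=
| s_root t t' : rule t t' -> step t t'
| s_1 f a a' : step a a' -> step (Fn1 f a) (Fn1 f a')
| s_21 f a a' b : step a a' -> step (Fn2 f a b) (Fn2 f a' b)
| s_22 f a b b' : step b b' -> step (Fn2 f a b) (Fn2 f a b')
| s_31 f a a' b c : step a a' -> step (Fn3 f a b c) (Fn3 f a' b c)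
| s_32 f a b b' c : step b b' -> step (Fn3 f a b c) (Fn3 f a b' c)
| s_33 f a b c c' : step c c' -> step (Fn3 f a b c) (Fn3 f a b c').

Definition normal (t : term) : Prop := forall t', ~ step t t'.

(* equality modulo E: the congruence generated by the equations *)
Definition eqE : term -> term -> Prop := clos_refl_sym_trans term step.

Definition position := list nat.

(* T|_p (None if p is not a position of T); arguments numbered from 1 *)
Fixpoint subterm_at (t : term) (p : position) : option term :=
  match p with
  | [] => Some t
  | i :: p' =>
      match t, i with
      | Fn1 _ a, 1 => subterm_at a p'
      | Fn2 _ a _, 1 => subterm_at a p'
      | Fn2 _ _ b, 2 => subterm_at b p'
      | Fn3 _ a _ _, 1 => subterm_at a p'
      | Fn3 _ _ b _, 2 => subterm_at b p'
      | Fn3 _ _ _ c, 3 => subterm_at c p'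
      | _, _ => None
      end
  end.

Definition pos_le (p q : position) : Prop := exists r, q = p ++ r.
Definition pos_lt (p q : position) : Prop := exists r, r <> [] /\ q = p ++ r.

Definition is_enc (t : term) : Prop :=
  match t with Fn3 Enc _ _ _ | Fn3 Enca _ _ _ => True | _ => False end.

Definition is_pair_or_sign (t : term) : Prop :=
  match t with Fn2 Pair _ _ | Fn2 Sign _ _ => True | _ => False end.

Fixpoint repl (s : nat) (M t : term) : term :=
  match t with
  | Name n => if Nat.eqb n s then M else t
  | Var _ | Cst _ => t
  | Fn1 f a => Fn1 f (repl s M a)
  | Fn2 f a b => Fn2 f (repl s M a) (repl s M b)
  | Fn3 f a b c => Fn3 f (repl s M a) (repl s M b) (repl s M c)
  end.

Fixpoint has_var (x : nat) (t : term) : Prop :=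
  match t with
  | Var y => y = x
  | Name _ | Cst _ => False
  | Fn1 _ a => has_var x a
  | Fn2 _ a b => has_var x a \/ has_var x b
  | Fn3 _ a b c => has_var x a \/ has_var x b \/ has_var x c
  end.

Definition ground (t : term) : Prop := forall x, ~ has_var x t.

Fixpoint has_name (n : nat) (t : term) : Prop :=
  match t with
  | Name m => m = n
  | Var _ | Cst _ => False
  | Fn1 _ a => has_name n a
  | Fn2 _ a b => has_name n a \/ has_name n b
  | Fn3 _ a b c => has_name n a \/ has_name n b \/ has_name n c
  end.

Fixpoint has_priv (t : term) : Prop :=
  match t with
  | Var _ | Name _ | Cst _ => False
  | Fn1 Priv _ => True
  | Fn1 _ a => has_priv a
  | Fn2 _ a b => has_priv a \/ has_priv b
  | Fn3 _ a b c => has_priv a \/ has_priv b \/ has_priv c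
  end.

(* phi = nu names. sigma; sigma is a finite substitution given as a list of
   bindings (x, sigma(x)) with duplicate-free domain and ground range. *)
Record frame : Type := mkFrame {
  fr_names : list nat;
  fr_sigma : list (nat * term)
}.

Definition dom (phi : frame) : list nat := map fst (fr_sigma phi).
Definition ran (phi : frame) : list term := map snd (fr_sigma phi).

Definition frame_ok (phi : frame) : Prop :=
  NoDup (dom phi) /\ forall t, In t (ran phi) -> ground t.

Fixpoint lookup (sg : list (nat * term)) (x : nat) : option term :=
  match sg with
  | [] => None
  | (y, t) :: sg' => if Nat.eqb x y then Some t else lookup sg' x
  end.

Fixpoint apply_sigma (sg : list (nat * term)) (t : term) : term :=
  match t with
  | Var x => match lookup sg x with Some u => u | None => t end
  | Name _ | Cst _ => t
  | Fn1 f a => Fn1 f (apply_sigma sg a)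
  | Fn2 f a b => Fn2 f (apply_sigma sg a) (apply_sigma sg b)
  | Fn3 f a b c => Fn3 f (apply_sigma sg a) (apply_sigma sg b) (apply_sigma sg c)
  end.

Definition public (phi : frame) (t : term) : Prop :=
  (forall n, In n (fr_names phi) -> ~ has_name n t) /\ ~ has_priv t.

Inductive ded (phi : frame) : term -> Prop :=
| d_var x t : In (x, t) (fr_sigma phi) -> ded phi t
| d_name n : ~ In n (fr_names phi) -> ded phi (Name n)
| d_cst c : ded phi (Cst c)
| d_fn1 f a : f <> Priv -> ded phi a -> ded phi (Fn1 f a)
| d_fn2 f a b : ded phi a -> ded phi b -> ded phi (Fn2 f a b)
| d_fn3 f a b c : ded phi a -> ded phi b -> ded phi c -> ded phi (Fn3 f a b c)
| d_eq t t' : ded phi t -> eqE t t' -> ded phi t'.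

Definition agent_enc (m : list nat) (U : term) (q : position) : Prop :=
  (exists t, subterm_at U q = Some t /\ is_enc t) /\
  exists n, In n m /\ subterm_at U (q ++ [3]) = Some (Name n).

Definition prob_enc (S : list term) (U : term) (q : position) : Prop :=
  (exists t, subterm_at U q = Some t /\ is_enc t) /\
  forall V p, In V S -> subterm_at V p = subterm_at U (q ++ [3]) ->
    exists q', p = q' ++ [3] /\ subterm_at V q' = subterm_at U q.

Definition plaintext_above (q qT : position) : Prop := pos_le (q ++ [1]) qT.

Definition ext_well_formed (phi : frame) (s : nat) : Prop :=
  (forall t, In t (ran phi) -> normal t) /\
  (forall t q, In t (ran phi) -> agent_enc (fr_names phi) t q ->
     prob_enc (ran phi) t q) /\
  (forall t qs, In t (ran phi) -> subterm_at t qs = Some (Name s) ->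
     exists q, agent_enc (remove Nat.eq_dec s (fr_names phi)) t q /\
               plaintext_above q qs) /\
  (* (4) the lowest (deepest) such encryption q0 *)
  (forall t qs q0, In t (ran phi) -> subterm_at t qs = Some (Name s) ->
     agent_enc (remove Nat.eq_dec s (fr_names phi)) t q0 ->
     plaintext_above q0 qs ->
     (forall q1, agent_enc (remove Nat.eq_dec s (fr_names phi)) t q1 ->
        plaintext_above q1 qs -> ~ pos_lt q0 q1) ->
     forall q u, pos_lt q0 q -> pos_lt q qs -> subterm_at t q = Some u ->
       is_pair_or_sign u).

Definition s_under_enc (s : nat) (W : term) : Prop :=
  forall qs, subterm_at W qs = Some (Name s) ->
    exists qe u, subterm_at W qe = Some u /\ is_enc u /\ pos_lt qe qs.

Definition subterm_of_ran (phi : frame) (W : term) : Prop :=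
  exists t p, In t (ran phi) /\ subterm_at t p = Some W.

(* Main.v *)
Require Import Defs.
From Stdlib Require Import List Arith Lia Classical.
Import ListNotations.

Lemma subterm_at_app t p q : subterm_at t (p ++ q) =
  match subterm_at t p with Some u => subterm_at u q | None => None end.
Proof.
  revert t; induction p as [|i p IH]; intro t; [destruct t; reflexivity|].
  destruct t; destruct i as [|[|[|[|i]]]]; simpl; auto.
Qed.

Lemma sub_comp t p u q : subterm_at t p = Some u -> subterm_at t (p ++ q) = subterm_at u q.
Proof. intro H. rewrite subterm_at_app, H. reflexivity. Qed.

Lemma prefix_cmp (a b L : position) : pos_le a L -> pos_le b L -> pos_le a b \/ pos_le b a.
Proof.
  revert b L; induction a as [|x a IH]; intros b L [r1 H1] [r2 H2].
  - left; exists b; reflexivity.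
  - destruct b as [|y b]. right; exists (x::a); reflexivity.
    destruct L as [|z L]; [discriminate|].
    simpl in H1, H2; injection H1 as -> H1; injection H2 as -> H2.
    destruct (IH b L) as [[r H]|[r H]]; [exists r1; auto|exists r2; auto| |].
    left; exists r; simpl; congruence. right; exists r; simpl; congruence.
Qed.

Lemma lowest (L : position) (P : position -> Prop) :
  (forall q, P q -> pos_le q L) -> forall q, P q ->
  exists q0, P q0 /\ forall q1, P q1 -> ~ pos_lt q0 q1.
Proof.
  intros HL.
  assert (forall n q, length L - length q <= n -> P q ->
           exists q0, P q0 /\ forall q1, P q1 -> ~ pos_lt q0 q1).
  { induction n as [|n IH]; intros q Hn Hq;
    destruct (classic (exists q1, P q1 /\ pos_lt q q1)) as [[q1 [H1 [r [Hr E]]]]|Hno].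
    - exfalso. destruct (HL q1 H1) as [r' E'].
      assert (length q1 = length q + length r) by (subst; apply length_app).
      assert (length L = length q1 + length r') by (subst; apply length_app).
      destruct r; [congruence|simpl in *; lia].
    - exists q; split; auto. intros q1 H1 Hlt; apply Hno; eauto.
    - apply (IH q1); auto. destruct (HL q1 H1) as [r' E'].
      assert (length q1 = length q + length r) by (subst; apply length_app).
      assert (length L = length q1 + length r') by (subst; apply length_app).
      destruct r; [congruence|simpl in *; lia].
    - exists q; split; auto. intros q1 H1 Hlt; apply Hno; eauto. }
  intros q Hq; eapply (H (length L - length q) q); auto.
Qed.

Lemma sub_nil t : subterm_at t [] = Some t.
Proof. destruct t; reflexivity. Qed.

Definition NN phi s := remove Nat.eq_dec s (fr_names phi).
Definition Pgood phi s Y := forall qs, subterm_at Y qs = Some (Name s) ->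
  exists q, agent_enc (NN phi s) Y q /\ pos_lt q qs.
Definition pubN phi Y0 := forall n, In n (fr_names phi) -> ~ has_name n Y0.
Definition Clsr phi s Y := subterm_of_ran phi Y /\ Pgood phi s Y.
Definition Cls phi s Y := Clsr phi s Y \/
  exists Y0, pubN phi Y0 /\ Y = apply_sigma (fr_sigma phi) Y0.

Lemma lookup_in sg x u : lookup sg x = Some u -> In u (map snd sg).
Proof.
  induction sg as [|[y t] sg IH]; simpl; [discriminate|].
  destruct (x =? y); [intros [=<-]; auto|auto].
Qed.

Lemma agent_sub phi s t p u q : subterm_at t p = Some u ->
  agent_enc (NN phi s) u q -> agent_enc (NN phi s) t (p ++ q).
Proof.
  intros Hp [[e [He1 He2]] [n [Hn1 Hn2]]]. split.
  - exists e; split; auto. rewrite (sub_comp _ _ _ _ Hp); auto.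
  - exists n; split; auto. rewrite <- app_assoc, (sub_comp _ _ _ _ Hp); auto.
Qed.

Lemma agent_sub_inv phi s t p u q : subterm_at t p = Some u ->
  agent_enc (NN phi s) t (p ++ q) -> agent_enc (NN phi s) u q.
Proof.
  intros Hp [[e [He1 He2]] [n [Hn1 Hn2]]]. split.
  - exists e; split; auto. rewrite <- (sub_comp _ _ _ _ Hp); auto.
  - exists n; split; auto. rewrite <- (sub_comp _ _ _ _ Hp), app_assoc; auto.
Qed.

Lemma var_clsr phi s x u : ext_well_formed phi s ->
  lookup (fr_sigma phi) x = Some u -> Clsr phi s u.
Proof.
  intros (_ & _ & H3 & _) Hl. pose proof (lookup_in _ _ _ Hl) as Hin.
  split. exists u, []; split; [exact Hin|apply sub_nil].
  intros qs Hqs. destruct (H3 u qs Hin Hqs) as [q [Ha [r Hr]]].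
  exists q; split; [exact Ha|]. exists (1 :: r); split; [discriminate|].
  rewrite Hr, <- app_assoc; reflexivity.
Qed.

Lemma cls_not_s phi s Y : ext_well_formed phi s -> In s (fr_names phi) ->
  Cls phi s Y -> Y <> Name s.
Proof.
  intros Hwf Hs [[_ Hg]|[Y0 [Hp ->]]] E.
  - subst Y. destruct (Hg [] eq_refl) as [q [_ [r [Hr E']]]].
    destruct r; [congruence|destruct q; discriminate].
  - destruct Y0; simpl in E; try discriminate.
    + destruct (lookup (fr_sigma phi) x) eqn:L; [|discriminate]. subst.
      destruct (var_clsr _ _ _ _ Hwf L) as [_ Hg].
      destruct (Hg [] (sub_nil _)) as [q [_ [r [Hr E']]]]. destruct r; [congruence|destruct q; discriminate].
    + injection E as ->. apply (Hp s Hs). reflexivity.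
Qed.

Lemma clsr_child phi s X i c : Clsr phi s X -> ~ agent_enc (NN phi s) X [] ->
  subterm_at X [i] = Some c -> Clsr phi s c.
Proof.
  intros [[t [p [Ht Hp]]] Hg] Hna Hc. split.
  - exists t, (p ++ [i]); split; auto. rewrite (sub_comp _ _ _ _ Hp); auto.
  - intros qs Hqs. destruct (Hg ([i] ++ qs)) as [q [Ha [r [Hr E]]]].
    { rewrite (sub_comp _ _ _ _ Hc); auto. }
    destruct q as [|j q]. { exfalso; apply Hna; exact Ha. }
    simpl in E. injection E as <- E.
    exists q; split. apply (agent_sub_inv _ _ X [i] c q Hc Ha).
    exists r; split; auto.
Qed.

Lemma pub_children_helper phi a : pubN phi a -> pubN phi a.
Proof. auto. Qed.

Lemma keyA phi s E r : ext_well_formed phi s -> subterm_of_ran phi E ->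
  is_enc E -> subterm_at E [3] = Some (Name r) -> In r (NN phi s) ->
  forall t' p, In t' (ran phi) -> subterm_at t' p = Some (Name r) ->
  exists q', p = q' ++ [3] /\ subterm_at t' q' = Some E.
Proof.
  intros (_ & H2 & _) [t [p0 [Ht Hp0]]] He Hr Hrn t' p Ht' Hp.
  apply in_remove in Hrn as [Hrn _].
  assert (Hag : agent_enc (fr_names phi) t p0).
  { split. exists E; auto. exists r; split; auto. rewrite (sub_comp _ _ _ _ Hp0); auto. }
  destruct (H2 t p0 Ht Hag) as [_ Hpe].
  destruct (Hpe t' p Ht') as [q' [E1 E2]].
  { rewrite Hp, (sub_comp _ _ _ _ Hp0); auto. }
  exists q'; split; auto. congruence.
Qed.

Lemma key_Y phi s M X Y : ext_well_formed phi s -> In s (fr_names phi) ->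
  public phi M -> Clsr phi s X -> agent_enc (NN phi s) X [] -> Cls phi s Y ->
  repl s M X = repl s M Y -> X = Y.
Proof.
  intros Hwf Hs [HM _] HX [[e [He1 He2]] [r [Hr1 Hr2]]] HY E.
  rewrite sub_nil in He1; injection He1 as <-.
  assert (Hrs : r <> s) by (apply in_remove in Hr1; tauto).
  assert (HrN : In r (fr_names phi)) by (apply in_remove in Hr1; tauto).
  destruct X as [| | | | |f a b c]; try contradiction. simpl in Hr2.
  rewrite sub_nil in Hr2; injection Hr2 as ->.
  pose proof (cls_not_s _ _ _ Hwf Hs HY) as HYs.
  destruct Y as [| n | | | |f' a' b' c']; simpl in E; try discriminate.
  { destruct (Nat.eqb_spec n s); [subst; congruence|discriminate]. }
  injection E as Ef Ea Eb Ec; subst f'.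
  apply Nat.eqb_neq in Hrs. rewrite Hrs in Ec.
  assert (c' = Name r).
  { destruct c'; simpl in Ec; try discriminate; auto.
    destruct (Nat.eqb_spec n s); [|congruence].
    exfalso; apply (HM r HrN); rewrite <- Ec; reflexivity. }
  subst c'.
  assert (Hsr : subterm_of_ran phi (Fn3 f a b (Name r))) by apply HX.
  assert (HrNN : In r (NN phi s)) by exact Hr1.
  assert (Key := keyA phi s _ r Hwf Hsr He2 eq_refl HrNN).
  assert (Fin : forall t' p', In t' (ran phi) -> subterm_at t' p' = Some (Fn3 f a' b' (Name r)) ->
     Fn3 f a b (Name r) = Fn3 f a' b' (Name r)).
  { intros t' p' Ht' Hp'. destruct (Key t' (p' ++ [3]) Ht') as [q' [E1 E2]].
    { rewrite (sub_comp _ _ _ _ Hp'); reflexivity. }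
    apply app_inj_tail in E1 as [<- _]. congruence. }
  destruct HY as [[[t' [p' [Ht' Hp']]] _]|[Y0 [HP EY]]].
  - eapply Fin; eauto.
  - destruct Y0 as [x| | | | |f0 a0 b0 c0]; simpl in EY; try discriminate.
    + destruct (lookup (fr_sigma phi) x) eqn:L; [|discriminate].
      subst t. apply (Fin _ [] (lookup_in _ _ _ L)). apply sub_nil.
    + injection EY as -> -> -> Ec0.
      destruct c0 as [x| n | | | |]; simpl in Ec0; try discriminate.
      * destruct (lookup (fr_sigma phi) x) eqn:L; [|discriminate]. subst t.
        destruct (Key _ [] (lookup_in _ _ _ L) (sub_nil _)) as [q' [E1 _]].
        destruct q'; discriminate.
      * injection Ec0 as En; subst n. exfalso. apply (HP r HrN). simpl; auto.
Qed.

Lemma cls_child phi s X i c : ext_well_formed phi s -> Cls phi s X ->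
  ~ (Clsr phi s X /\ agent_enc (NN phi s) X []) ->
  subterm_at X [i] = Some c -> Cls phi s c.
Proof.
  intros Hwf HX Hn Hc.
  destruct HX as [HX|[Y0 [HP ->]]].
  - left. eapply clsr_child; eauto.
  - destruct Y0 as [x| | | f0 a0 | f0 a0 b0 | f0 a0 b0 c0]; simpl in Hc.
    + destruct (lookup (fr_sigma phi) x) eqn:L; [|simpl in Hc; destruct i as [|[|[|[|i]]]]; discriminate].
      pose proof (var_clsr _ _ _ _ Hwf L). left. eapply clsr_child; eauto.
      simpl in Hn; rewrite L in Hn. intro; apply Hn; split; auto.
    + discriminate.
    + discriminate.
    + destruct i as [|[|i]]; simpl in Hc; try discriminate.
      rewrite sub_nil in Hc; injection Hc as <-. right; exists a0; split; [intros n Hn0 H; apply (HP n Hn0); simpl; auto|auto].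
    + destruct i as [|[|[|i]]]; simpl in Hc; try discriminate;
      rewrite sub_nil in Hc; injection Hc as <-.
      * right; exists a0; split; [intros n Hn0 H; apply (HP n Hn0); simpl; auto|auto].
      * right; exists b0; split; [intros n Hn0 H; apply (HP n Hn0); simpl; auto|auto].
    + destruct i as [|[|[|[|i]]]]; simpl in Hc; try discriminate;
      rewrite sub_nil in Hc; injection Hc as <-.
      * right; exists a0; split; [intros n Hn0 H; apply (HP n Hn0); simpl; auto|auto].
      * right; exists b0; split; [intros n Hn0 H; apply (HP n Hn0); simpl; auto|auto].
      * right; exists c0; split; [intros n Hn0 H; apply (HP n Hn0); simpl; auto|auto].
Qed.

Lemma main_inj phi s M : ext_well_formed phi s -> In s (fr_names phi) ->
  public phi M -> forall X, Cls phi s X -> forall Y, Cls phi s Y ->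
  repl s M X = repl s M Y -> X = Y.
Proof.
  intros Hwf Hs HM X.
  induction X as [x|n|c0|f a IHa|f a IHa b IHb|f a IHa b IHb c IHc];
    intros HX Y HY E;
    pose proof (cls_not_s _ _ _ Hwf Hs HX) as HXs;
    pose proof (cls_not_s _ _ _ Hwf Hs HY) as HYs;
    destruct Y as [y|m|d|f' a'|f' a' b'|f' a' b' c']; simpl in E;
    try (destruct (Nat.eqb_spec m s); [subst; congruence|]);
    try (destruct (Nat.eqb_spec n s); [subst; congruence|]);
    try discriminate; try congruence.
  - injection E as -> Ea. f_equal. apply IHa; auto.
    + apply (cls_child _ _ _ 1 a Hwf HX); [intros [_ [[e [H1 H2]] _]]; rewrite sub_nil in H1; injection H1 as <-; exact H2|apply sub_nil].
    + apply (cls_child _ _ _ 1 a' Hwf HY); [intros [_ [[e [H1 H2]] _]]; rewrite sub_nil in H1; injection H1 as <-; exact H2|apply sub_nil].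
  - injection E as Ef Ea Eb; subst f'.
    assert (NX : ~ (Clsr phi s (Fn2 f a b) /\ agent_enc (NN phi s) (Fn2 f a b) [])).
    { intros [_ [[e [H1 H2]] _]]; rewrite sub_nil in H1; injection H1 as <-; exact H2. }
    assert (NY : ~ (Clsr phi s (Fn2 f a' b') /\ agent_enc (NN phi s) (Fn2 f a' b') [])).
    { intros [_ [[e [H1 H2]] _]]; rewrite sub_nil in H1; injection H1 as <-; exact H2. }
    f_equal; [apply IHa|apply IHb]; auto.
    + apply (cls_child _ _ _ 1 _ Hwf HX NX); apply sub_nil.
    + apply (cls_child _ _ _ 1 _ Hwf HY NY); apply sub_nil.
    + apply (cls_child _ _ _ 2 _ Hwf HX NX); apply sub_nil.
    + apply (cls_child _ _ _ 2 _ Hwf HY NY); apply sub_nil.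
  - injection E as Ef Ea Eb Ec; subst f'.
    destruct (classic (Clsr phi s (Fn3 f a b c) /\ agent_enc (NN phi s) (Fn3 f a b c) [])) as [[H1 H2]|N1].
    { eapply key_Y; eauto. simpl; congruence. }
    destruct (classic (Clsr phi s (Fn3 f a' b' c') /\ agent_enc (NN phi s) (Fn3 f a' b' c') [])) as [[H1 H2]|N2].
    { symmetry; eapply key_Y; eauto. simpl; congruence. }
    f_equal; [apply IHa|apply IHb|apply IHc]; auto.
    + apply (cls_child _ _ _ 1 _ Hwf HX N1); apply sub_nil.
    + apply (cls_child _ _ _ 1 _ Hwf HY N2); apply sub_nil.
    + apply (cls_child _ _ _ 2 _ Hwf HX N1); apply sub_nil.
    + apply (cls_child _ _ _ 2 _ Hwf HY N2); apply sub_nil.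
    + apply (cls_child _ _ _ 3 _ Hwf HX N1); apply sub_nil.
    + apply (cls_child _ _ _ 3 _ Hwf HY N2); apply sub_nil.
Qed.

Lemma pgood_W phi s W : ext_well_formed phi s -> subterm_of_ran phi W ->
  s_under_enc s W -> Pgood phi s W.
Proof.
  intros Hwf [t [p0 [Ht Hp0]]] Hu qs Hqs.
  destruct Hwf as (H1 & H2 & H3 & H4).
  set (L := p0 ++ qs).
  assert (HL : subterm_at t L = Some (Name s)) by (unfold L; rewrite (sub_comp _ _ _ _ Hp0); auto).
  set (Q := fun q => agent_enc (NN phi s) t q /\ plaintext_above q L).
  destruct (H3 t L Ht HL) as [q Hq].
  destruct (lowest L Q) with (q := q) as [q0 [[Hag Hpa] Hlow]]; auto.
  { intros q' [_ [r Hr]]. exists ([1] ++ r). rewrite Hr, app_assoc; reflexivity. }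
  destruct (Hu qs Hqs) as [qe [u [Hu1 [Hu2 [r0 [Hr0 Er0]]]]]].
  assert (Htu : subterm_at t (p0 ++ qe) = Some u) by (rewrite (sub_comp _ _ _ _ Hp0); auto).
  assert (Hcase : pos_le (p0 ++ qe) q0 \/ pos_lt q0 (p0 ++ qe)).
  { destruct (prefix_cmp (p0 ++ qe) q0 L) as [H|[r H]].
    - exists r0. unfold L. rewrite Er0, app_assoc; reflexivity.
    - destruct Hpa as [r Hr]. exists ([1] ++ r). rewrite Hr, app_assoc; reflexivity.
    - left; auto.
    - destruct r as [|x r]. left; exists []; rewrite H, !app_nil_r; reflexivity.
      right; exists (x :: r); split; [discriminate|auto]. }
  destruct Hcase as [[r Hr]|Hlt].
  - exists (qe ++ r). split.
    + apply (agent_sub_inv phi s t p0 W); auto. rewrite app_assoc, <- Hr; auto.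
    + destruct Hpa as [k Hk]. exists (1 :: k); split; [discriminate|].
      unfold L in Hk. rewrite Hr in Hk. rewrite <- !app_assoc in Hk.
      apply app_inv_head in Hk. rewrite Hk, <- app_assoc; reflexivity.
  - exfalso.
    assert (Hps := H4 t L q0 Ht HL Hag Hpa (fun q1 H1 H2 => Hlow q1 (conj H1 H2))
                   (p0 ++ qe) u Hlt).
    assert (Hpp : is_pair_or_sign u).
    { apply Hps; [|exact Htu]. exists r0; split; auto. unfold L; rewrite Er0, app_assoc; reflexivity. }
    destruct u as [| | | |f ? ?|f ? ? ?]; simpl in *; try tauto;
      destruct f; simpl in *; tauto.
Qed.

Theorem corollary2p14 (phi : frame) (s : nat) (U V M W W' : term) :
  frame_ok phi ->
  ext_well_formed phi s ->
  In s (fr_names phi) ->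
  ~ ded phi (Name s) ->
  public phi U -> public phi V -> public phi M ->
  (forall x, has_var x U -> In x (dom phi)) ->
  (forall x, has_var x V -> In x (dom phi)) ->
  ground M ->
  subterm_of_ran phi W -> subterm_of_ran phi W' ->
  s_under_enc s W -> s_under_enc s W' ->
  (repl s M (apply_sigma (fr_sigma phi) U) = repl s M (apply_sigma (fr_sigma phi) V) ->
     apply_sigma (fr_sigma phi) U = apply_sigma (fr_sigma phi) V) /\
  (repl s M (apply_sigma (fr_sigma phi) U) = repl s M W ->
     apply_sigma (fr_sigma phi) U = W) /\
  (repl s M W = repl s M W' -> W = W').
Proof.
  intros Hok Hwf Hs Hded HU HV HM _ _ _ HW HW' HuW HuW'.
  assert (CU : Cls phi s (apply_sigma (fr_sigma phi) U)) by (right; exists U; split; [exact (proj1 HU)|reflexivity]).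
  assert (CV : Cls phi s (apply_sigma (fr_sigma phi) V)) by (right; exists V; split; [exact (proj1 HV)|reflexivity]).
  assert (CW : Cls phi s W) by (left; split; [exact HW|apply pgood_W; auto]).
  assert (CW' : Cls phi s W') by (left; split; [exact HW'|apply pgood_W; auto]).
  split; [|split]; intro E; eapply main_inj; eauto.
Qed.
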